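(* Identify distributions on $S\times S$ with matrices in $\mathbb{R}^{S\times S}$. Let $\Phi$ be the set of $S\times S$ permutation matrices, $I$ the identity matrix, and $\mathrm{co}\,\Phi$ the convex hull of $\Phi$. Then $\mathcal{M}(m)=\big(\mu_0-I+\mathrm{co}\,\Phi\big)\cap\mathbb{R}_+^{S\times S}$, where $\mu_0-I+\mathrm{co}\,\Phi=\{\mu_0-I+J:J\in\mathrm{co}\,\Phi\}$.
   Context: $S$ is a finite set and $m\in\Delta(S)$. $\mathcal{M}(m)$ is the set of probability distributions on $S\times S$ both of whose marginals equal $m$, and $\mu_0\in\mathcal{M}(m)$ is defined by $\mu_0(s,s)=m(s)$ and $\mu_0(s,t)=0$ for $s\neq t$. A permutation matrix is a square matrix with entries in $\{0,1\}$ having exactly one entry equal to $1$ in each row and each column. *)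

(* Defs.v *)
From HB Require Import structures.
From mathcomp Require Import all_boot all_order all_algebra.
From mathcomp Require Import reals.
Set Implicit Arguments. Unset Strict Implicit. Unset Printing Implicit Defensive.
Import Order.TTheory GRing.Theory Num.Theory.
Local Open Scope ring_scope.

(* Distributions on S x S are identified with matrices, i.e. functions
   S -> S -> R (rows indexed by the first coordinate). *)

Section Defs.
Variables (R : realType) (S : finType).

Definition is_distr (m : S -> R) : Prop :=
  (forall s, 0 <= m s) /\ \sum_(s : S) m s = 1.

Definition is_distr2 (mu : S -> S -> R) : Prop :=
  (forall s t, 0 <= mu s t) /\ \sum_(s : S) \sum_(t : S) mu s t = 1.

Definition in_M (m : S -> R) (mu : S -> S -> R) : Prop :=
  is_distr2 mu /\
  (forall s, \sum_(t : S) mu s t = m s) /\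
  (forall t, \sum_(s : S) mu s t = m t).

Definition mu0 (m : S -> R) : S -> S -> R :=
  fun s t => if s == t then m s else 0.

Definition idm : S -> S -> R := fun s t => if s == t then 1 else 0.

Definition is_perm_matrix (J : S -> S -> R) : Prop :=
  (forall s t, J s t = 0 \/ J s t = 1) /\
  (forall s, exists! t, J s t = 1) /\
  (forall t, exists! s, J s t = 1).

Definition in_conv_hull (P : (S -> S -> R) -> Prop) (X : S -> S -> R) : Prop :=
  exists (n : nat) (w : 'I_n -> R) (A : 'I_n -> S -> S -> R),
    (forall i, 0 <= w i) /\ \sum_(i < n) w i = 1 /\
    (forall i, P (A i)) /\
    (forall s t, X s t = \sum_(i < n) w i * A i s t).

End Defs.

(* Main.v *)
Require Import Defs.
From HB Require Import structures.
From mathcomp Require Import all_boot all_order all_algebra.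
From mathcomp Require Import reals zify ring lra.
Import Order.TTheory GRing.Theory Num.Theory.
Local Open Scope ring_scope.
Set Implicit Arguments. Unset Strict Implicit. Unset Printing Implicit Defensive.

Section Hall.
Variable T : finType.
Local Open Scope nat_scope.
Definition nbh (e : rel T) (B : {set T}) : {set T} := [set y | [exists x in B, e x y]].

Lemma nbhP (e : rel T) (B : {set T}) y : reflect (exists2 x, x \in B & e x y) (y \in nbh e B).
Proof. rewrite inE; exact: (iffP exists_inP). Qed.

Lemma hall_gen (n : nat) : forall (e : rel T) (A : {set T}), #|A| <= n ->
  (forall B : {set T}, B \subset A -> #|B| <= #|nbh e B|) ->
  exists f : T -> T, {in A &, injective f} /\ forall x, x \in A -> e x (f x).
Proof.
elim: n => [|n IH] e A hA hH.
  have A0 : A = set0 by apply/cards0_eq; lia.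
  by exists id; split; [move=> x y|move=> x]; rewrite A0 inE.
have [tight|notight] := boolP [exists B : {set T},
   [&& B \subset A, B != set0, B != A & #|nbh e B| <= #|B|]].
  case/existsP: tight => B /and4P [sBA B0 BA hNB].
  have pBA : B \proper A by rewrite properEneq BA.
  have cBA := proper_card pBA.
  have [f1 [inj1 e1]] : exists f : T -> T, {in B &, injective f} /\ forall x, x \in B -> e x (f x).
    apply: (IH e B); first lia.
    by move=> C sCB; apply: hH; apply: subset_trans sCB sBA.
  pose e2 := [rel x y | e x y && (y \notin nbh e B)].
  have [f2 [inj2 e2P]] : exists f : T -> T, {in A :\: B &, injective f} /\
        forall x, x \in A :\: B -> e2 x (f x).
    apply: (IH e2 (A :\: B)).
      rewrite cardsDS //. have : 0 < #|B| by rewrite card_gt0. lia.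
    move=> C sC.
    have dCB : [disjoint C & B].
      rewrite -setI_eq0; apply/eqP/setP => x; rewrite !inE.
      apply/negP => /andP [xC xB]; move/subsetP: sC => /(_ x xC).
      by rewrite inE xB.
    have sCBA : C :|: B \subset A.
      rewrite subUset sBA andbT; apply: subset_trans sC _; exact: subsetDl.
    have h1 := hH _ sCBA.
    have h2 : nbh e (C :|: B) \subset nbh e2 C :|: nbh e B.
      apply/subsetP => y /nbhP [x]; rewrite inE => /orP [xC|xB] exy; rewrite inE.
        case yN: (y \in nbh e B); first by rewrite orbT.
        by apply/orP; left; apply/nbhP; exists x; rewrite // /= exy /= yN.
      by apply/orP; right; apply/nbhP; exists x.
    have h3 := subset_leq_card h2.
    have h4 := leq_card_setU (nbh e2 C) (nbh e B).
    have h5 := leq_card_setU C B. rewrite dCB in h5.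
    case: h4 => h4 _. case: h5 => _ h5. move/eqP: h5 => h5.
    move: h1 h3 h4 h5 hNB; lia.
  exists (fun x => if x \in B then f1 x else f2 x); split.
    move=> x y xA yA /=.
    case xB: (x \in B); case yB: (y \in B).
    - by apply: inj1; rewrite ?xB ?yB.
    - move=> hxy; have : f1 x \in nbh e B by apply/nbhP; exists x; rewrite ?xB // e1 ?xB.
      have : y \in A :\: B by rewrite inE yB yA.
      by move/e2P => /andP [_]; rewrite -hxy => /negP.
    - move=> hxy; have : f1 y \in nbh e B by apply/nbhP; exists y; rewrite ?yB // e1 ?yB.
      have : x \in A :\: B by rewrite inE xB xA.
      by move/e2P => /andP [_]; rewrite hxy => /negP.
    - by apply: inj2; rewrite inE ?xB ?yB ?xA ?yA.
  move=> x xA; case xB: (x \in B); first by apply: e1; rewrite xB.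
  have : x \in A :\: B by rewrite inE xB xA.
  by move/e2P => /andP [].
have [A0|[a aA]] := set_0Vmem A.
  by exists id; split; [move=> x y|move=> x]; rewrite A0 inE.
have : 0 < #|nbh e [set a]|.
  have := hH [set a]; rewrite sub1set aA cards1 => /(_ isT); lia.
rewrite card_gt0 => /set0Pn [b /nbhP [a']]; rewrite inE => /eqP -> eab.
pose e2 := [rel x y | e x y && (y != b)].
have [f2 [inj2 e2P]] : exists f : T -> T, {in A :\ a &, injective f} /\
      forall x, x \in A :\ a -> e2 x (f x).
  apply: (IH e2 (A :\ a)).
    move: hA; rewrite (cardsD1 a A) aA; lia.
  move=> C sC.
  have [C0|CN0] := eqVneq C set0; first by rewrite C0 cards0.
  have sCA : C \subset A by apply: subset_trans sC (subsetDl _ _).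
  have CA : C != A.
    apply/negP => /eqP CA; move/subsetP: sC => /(_ a); rewrite CA aA !inE eqxx.
    by move/(_ isT).
  have lt : #|C| < #|nbh e C|.
    rewrite ltnNge; apply/negP => hle; move/negP: notight; apply.
    by apply/existsP; exists C; rewrite sCA CN0 CA hle.
  have h2 : nbh e C \subset b |: nbh e2 C.
    apply/subsetP => y /nbhP [x xC exy]; rewrite !inE.
    case: (eqVneq y b) => //= yb; apply/existsP; exists x.
    by rewrite xC /= exy yb.
  have := subset_leq_card h2; rewrite cardsU1; lia.
exists (fun x => if x == a then b else f2 x); split.
  move=> x y xA yA /=.
  case: (eqVneq x a) => xa; case: (eqVneq y a) => ya.
  - by rewrite xa ya.
  - have : y \in A :\ a by rewrite !inE ya yA.
    by move/e2P => /andP [_] /eqP hb hxy; rewrite hxy in hb.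
  - have : x \in A :\ a by rewrite !inE xa xA.
    by move/e2P => /andP [_] /eqP hb hxy; rewrite -hxy in hb.
  - by apply: inj2; rewrite !inE ?xa ?ya ?xA ?yA.
move=> x xA; case: (eqVneq x a) => [->//|xa].
have : x \in A :\ a by rewrite !inE xa xA.
by move/e2P => /andP [].
Qed.
End Hall.

Section B.
Variables (R : realType) (S : finType).

Lemma sum_delta (F : S -> R) a : \sum_t (if t == a then F t else 0) = F a.
Proof. by rewrite (bigD1 a) //= eqxx big1 ?addr0 // => t /negbTE ->. Qed.

Lemma sum_delta' (F : S -> R) a : \sum_t (if a == t then F t else 0) = F a.
Proof. by rewrite -(sum_delta F a); apply: eq_bigr => t _; rewrite eq_sym. Qed.

Definition pm (f : S -> S) : S -> S -> R := fun s t => if f s == t then 1 else 0.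

Lemma pm_row f s : \sum_t pm f s t = 1.
Proof. exact: (sum_delta' (fun _ => 1) (f s)). Qed.

Lemma pm_col f (fi : injective f) t : \sum_s pm f s t = 1.
Proof.
have /codomP [s' ->] := inj_card_onto fi (leqnn _) t.
rewrite -(sum_delta (fun _ => 1) s'); apply: eq_bigr => s _.
by rewrite /pm (inj_eq fi).
Qed.

Lemma pm_perm f (fi : injective f) : is_perm_matrix (pm f).
Proof.
split; [|split].
- by move=> s t; rewrite /pm; case: ifP => _; [right|left].
- move=> s; exists (f s); split; first by rewrite /pm eqxx.
  move=> t; rewrite /pm; case: eqP => // _ /eqP; rewrite eq_sym oner_eq0.
  done.
- move=> t; have /codomP [s' ->] := inj_card_onto fi (leqnn _) t.
  exists s'; split; first by rewrite /pm eqxx.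
  move=> s; rewrite /pm; case: eqP => [/fi //|_ /eqP]; rewrite eq_sym oner_eq0.
  done.
Qed.

Definition supp (A : S -> S -> R) := [set p : S * S | 0 < A p.1 p.2].

Lemma hall_cond c (A : S -> S -> R) : 0 < c -> (forall s t, 0 <= A s t) ->
  (forall s, \sum_t A s t = c) -> (forall t, \sum_s A s t = c) ->
  forall B : {set S}, (#|B| <= #|nbh [rel s t | (0 < A s t)%R] B|)%N.
Proof.
move=> c0 A0 hr hc B; set N := nbh _ B.
rewrite -(ler_pMn2l c0).
have e1 : c *+ #|B| = \sum_(s in B) \sum_(t in N) A s t.
  rewrite -sumr_const; apply: eq_bigr => s sB.
  rewrite -(hr s) (bigID (mem N)) /= [X in _ + X]big1 ?addr0 // => t tN.
  apply/le_anti; rewrite A0 andbT leNgt; apply/negP => h.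
  by move/negP: tN; apply; apply/nbhP; exists s.
have e2 : c *+ #|N| = \sum_(t in N) \sum_s A s t.
  by rewrite -sumr_const; apply: eq_bigr => t _; rewrite hc.
rewrite e1 e2 exchange_big /=; apply: ler_sum => t _.
by rewrite [X in _ <= X](bigID (mem B)) /= lerDl sumr_ge0.
Qed.

Lemma step c (A : S -> S -> R) (s0 : S) : 0 < c -> (forall s t, 0 <= A s t) ->
  (forall s, \sum_t A s t = c) -> (forall t, \sum_s A s t = c) ->
  exists f e, injective f /\ 0 < e /\ e <= c /\
    (forall s t, 0 <= A s t - e * pm f s t) /\
    (#|supp (fun s t => (A s t - e * pm f s t)%R)| < #|supp A|)%N.
Proof.
move=> c0 A0 hr hc.
have [f [fi fe]] := @hall_gen _ #|S| [rel s t | 0 < A s t] setT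
   (eq_leq (cardsT S)) (fun B _ => hall_cond c0 A0 hr hc B).
have finj : injective f by move=> x y; apply: fi; rewrite inE.
case: (@arg_minP _ R S s0 predT (fun s => A s (f s)) isT) => s1 _ hmin.
have pm0 : forall s t, 0 <= pm f s t by move=> s t; rewrite /pm; case: ifP.
have e0 : 0 < A s1 (f s1) by have := fe s1; rewrite inE; apply.
exists f, (A s1 (f s1)); split => //; split => //; split.
  by rewrite -(hr s1) (bigD1 (f s1)) //= lerDl sumr_ge0.
split.
  move=> s t; rewrite /pm; case: eqP => [<-|_].
    by rewrite mulr1 subr_ge0 hmin.
  by rewrite mulr0 subr0.
apply: proper_card; apply/properP; split.
  apply/subsetP => -[s t]; rewrite !inE /= => h; apply: (lt_le_trans h).
  by rewrite lerBlDr lerDl mulr_ge0 // ltW.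
exists (s1, f s1); rewrite !inE //=.
by rewrite /pm eqxx mulr1 subrr ltxx.
Qed.

Definition decomp c (A : S -> S -> R) := exists n (w : 'I_n -> R) (P : 'I_n -> S -> S -> R),
    (forall i, 0 <= w i) /\ \sum_(i < n) w i = c /\
    (forall i, is_perm_matrix (P i)) /\
    (forall s t, A s t = \sum_(i < n) w i * P i s t).

Lemma birk0 (A : S -> S -> R) : (forall s t, 0 <= A s t) ->
  (forall s, \sum_t A s t = 0) -> decomp 0 A.
Proof.
move=> A0 hr; exists 0%N, (fun _ => 0), (fun _ _ _ => 0).
split; first by case.
split; first by rewrite big_ord0.
split; first by case.
move=> s t; rewrite big_ord0.
by apply: (@psumr_eq0P _ _ predT (A s)) => // i _.
Qed.

Lemma birkE c (A : S -> S -> R) : 0 <= c -> (forall s : S, False) -> decomp c A.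
Proof.
move=> c0 hS; exists 1%N, (fun _ => c), (fun _ _ _ => 0).
split => //; split; first by rewrite big_ord1.
split; last by move=> s; case: (hS s).
by move=> i; split; [|split]; move=> s; case: (hS s).
Qed.

Lemma extend c e f (A : S -> S -> R) : 0 <= e -> injective f ->
  decomp (c - e) (fun s t => A s t - e * pm f s t) -> decomp c A.
Proof.
move=> e0 fi [n [w [P [w0 [ws [Pp hA]]]]]].
exists n.+1, (fun i => if unlift ord0 i is Some j then w j else e),
  (fun i => if unlift ord0 i is Some j then P j else pm f).
split; first by move=> i; case: (unlift ord0 i).
split.
  rewrite big_ord_recl unlift_none.
  under eq_bigr => i _ do rewrite liftK.
  by rewrite ws addrC subrK.
split; first by move=> i; case: (unlift ord0 i) => [j|]; [apply: Pp|apply: pm_perm].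
move=> s t; rewrite big_ord_recl unlift_none.
under eq_bigr => i _ do rewrite liftK.
by rewrite -hA addrC subrK.
Qed.

Lemma birk k : forall c (A : S -> S -> R), (#|supp A| <= k)%N -> 0 <= c ->
  (forall s t, 0 <= A s t) ->
  (forall s, \sum_t A s t = c) -> (forall t, \sum_s A s t = c) -> decomp c A.
Proof.
elim: k => [|k IH] c A hk c0 A0 hr hc.
  have [c00|cn0] := eqVneq c 0; first by subst c; exact: birk0.
  case: (pickP (@predT S)) => [s0 _|hS]; last by apply: birkE => // s; have := hS s.
  have cp : 0 < c by rewrite lt_def cn0 c0.
  have [f [e [_ [_ [_ [_ hlt]]]]]] := step s0 cp A0 hr hc.
  by move: hlt; rewrite ltnNge (leq_trans hk).
have [c00|cn0] := eqVneq c 0; first by subst c; exact: birk0.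
case: (pickP (@predT S)) => [s0 _|hS]; last by apply: birkE => // s; have := hS s.
have cp : 0 < c by rewrite lt_def cn0 c0.
have [f [e [fi [e0 [ec [A'0 hlt]]]]]] := step s0 cp A0 hr hc.
apply: (extend (ltW e0) fi); apply: IH => //.
- by rewrite -ltnS (leq_trans hlt).
- by rewrite subr_ge0.
- move=> s; rewrite sumrB -mulr_sumr pm_row mulr1 hr //.
- move=> t; rewrite sumrB -mulr_sumr pm_col // mulr1 hc //.
Qed.

Lemma perm_row (P : S -> S -> R) : is_perm_matrix P -> forall s, \sum_t P s t = 1.
Proof.
case=> [h01 [hr _]] s; case: (hr s) => t0 [ht0 hu].
rewrite (bigD1 t0) //= ht0 big1 ?addr0 // => t tt0.
case: (h01 s t) => // h1; have e := hu t h1; by rewrite e eqxx in tt0.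
Qed.

Lemma perm_col (P : S -> S -> R) : is_perm_matrix P -> forall t, \sum_s P s t = 1.
Proof.
case=> [h01 [_ hc]] t; case: (hc t) => s0 [hs0 hu].
rewrite (bigD1 s0) //= hs0 big1 ?addr0 // => s ss0.
case: (h01 s t) => // h1; have e := hu s h1; by rewrite e eqxx in ss0.
Qed.

End B.

Unset Implicit Arguments.
Theorem lemma5 (R : realType) (S : finType) (m : S -> R) (hm : is_distr m)
    (mu : S -> S -> R) :
  in_M m mu <->
  ((exists J : S -> S -> R,
      in_conv_hull (@is_perm_matrix R S) J /\
      (forall s t, mu s t = mu0 m s t - @idm R S s t + J s t)) /\
   (forall s t, 0 <= mu s t)).
Proof.
case: hm => hm0 hm1.
split.
  case=> [[mu00 hsum] [hr hc]]; split => //.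
  pose J := fun s t => mu s t - mu0 m s t + @idm R S s t.
  exists J; split; last by move=> s t; rewrite /J; ring.
  apply: (@birk R S #|supp J|) => //.
  - move=> s t; rewrite /J /mu0 /idm; case: eqP => [<-|_].
      have m1 : m s <= 1.
        by rewrite -hm1 (bigD1 s) //= lerDl sumr_ge0 // => i _.
      have := mu00 s s; lra.
    have := mu00 s t; lra.
  - move=> s; rewrite /J big_split sumrB /= hr /mu0 /idm.
    rewrite (sum_delta' (fun _ => m s) s) (sum_delta' (fun _ => 1) s); ring.
  - move=> t; rewrite /J big_split sumrB /= hc /mu0 /idm.
    rewrite (sum_delta m t) (sum_delta (fun _ => 1) t); ring.
case=> [[J [[n [w [P [w0 [ws [Pp hJ]]]]]] hmu]] h0].
have Jr : forall s, \sum_t J s t = 1.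
  move=> s; under eq_bigr do rewrite hJ.
  rewrite exchange_big /=.
  under eq_bigr => i _ do rewrite -mulr_sumr perm_row // mulr1.
  exact: ws.
have Jc : forall t, \sum_s J s t = 1.
  move=> t; under eq_bigr do rewrite hJ.
  rewrite exchange_big /=.
  under eq_bigr => i _ do rewrite -mulr_sumr perm_col // mulr1.
  exact: ws.
have hr : forall s, \sum_t mu s t = m s.
  move=> s; under eq_bigr do rewrite hmu.
  rewrite big_split sumrB /= Jr /mu0 /idm.
  rewrite (sum_delta' (fun _ => m s) s) (sum_delta' (fun _ => 1) s); ring.
have hc : forall t, \sum_s mu s t = m t.
  move=> t; under eq_bigr do rewrite hmu.
  rewrite big_split sumrB /= Jc /mu0 /idm.
  rewrite (sum_delta m t) (sum_delta (fun _ => 1) t); ring.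
split; last by split.
split => //.
by under eq_bigr do rewrite hr.
Qed.
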